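(* Let $G$ be a topological group with identity $e$, and let $k\ge1$ be an integer. The following statements are equivalent: (1) $G$ is a functional Alexandroff space; (1') $G$ is a $k$-primal space; (2) $V(e)$ is open and finite; (3) there exist a finite topological group $E$ carrying the indiscrete topology and a topological group $F$ carrying the discrete topology such that $E\times F$ and $G$ are homeomorphic topological spaces; (4) there exist a finite topological space $E$ with the indiscrete topology and a discrete topological space $F$ such that $E\times F$ and $G$ are homeomorphic topological spaces.
   Context: For a topological space $X$ and $a\in X$, $V(a):=\bigcap\{U: U\text{ open}, a\in U\}$. For $f:X\to X$ and $a\in X$, $V_f(a):=\{x\in X:\exists n\ge0,\ f^n(x)=a\}$; $X$ is a functional Alexandroff space if for some $f:X\to X$ the topology with basis $\{V_f(a):a\in X\}$ equals the topology of $X$. $X$ is $k$-primal if there are $f_1,\dots,f_k:X\to X$ such that for every $a\in X$ the set $V_{f_1}(a)\cap\dots\cap V_{f_k}(a)$ is open and is the smallest open neighbourhood of $a$. The indiscrete topology on a set has only the empty set and the whole set as open sets. *)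

(* Defs.v *)
From HB Require Import structures.
From mathcomp Require Import all_boot all_order all_algebra.
From mathcomp Require Import all_classical all_reals topology.
Set Implicit Arguments. Unset Strict Implicit. Unset Printing Implicit Defensive.
Local Open Scope classical_set_scope.

Definition is_topgroup (T : topologicalType) (mul : T -> T -> T) (inv : T -> T)
    (e : T) : Prop :=
  [/\ (forall x y z, mul x (mul y z) = mul (mul x y) z),
      (forall x, mul e x = x /\ mul x e = x),
      (forall x, mul (inv x) x = e /\ mul x (inv x) = e),
      continuous (fun p : T * T => mul p.1 p.2) &
      continuous inv].

Definition Vmin (T : topologicalType) (a : T) : set T :=
  [set x | forall U : set T, open U -> U a -> U x].

Definition Vf (T : Type) (f : T -> T) (a : T) : set T :=
  [set x | exists n : nat, iter n f x = a].

Definition functional_alexandroff (T : topologicalType) : Prop :=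
  exists f : T -> T, forall U : set T,
    open U <-> (forall x, U x -> exists a, Vf f a x /\ Vf f a `<=` U).

Definition k_primal (k : nat) (T : topologicalType) : Prop :=
  exists fs : 'I_k -> T -> T, forall a : T,
    open [set x | forall i, Vf (fs i) a x] /\
    [set x | forall i, Vf (fs i) a x] = Vmin a.

Definition indiscrete (T : topologicalType) : Prop :=
  forall A : set T, open A -> A = set0 \/ A = setT.

Definition discrete (T : topologicalType) : Prop :=
  forall A : set T, open A.

Definition homeomorphic (X Y : topologicalType) : Prop :=
  exists (f : X -> Y) (g : Y -> X),
    [/\ cancel f g, cancel g f, continuous f & continuous g].

(* Main.v *)
Require Import Defs.
From HB Require Import structures.
From mathcomp Require Import all_boot all_order all_algebra.
From mathcomp Require Import all_classical all_reals topology.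
Set Implicit Arguments. Unset Strict Implicit. Unset Printing Implicit Defensive.
Local Open Scope classical_set_scope.

Section Gen.
Variable T : topologicalType.

Lemma Vmin_refl (a : T) : Vmin a a.
Proof. by move=> U _. Qed.

Lemma Vmin_trans (a b c : T) : Vmin a b -> Vmin b c -> Vmin a c.
Proof. by move=> hab hbc U oU Ua; apply: hbc => //; apply: hab. Qed.

Lemma Vmin_sub (U : set T) a : open U -> U a -> Vmin a `<=` U.
Proof. by move=> oU Ua x; apply. Qed.

Lemma open_cover (U : set T) :
  (forall x, U x -> exists W : set T, [/\ open W, W x & W `<=` U]) -> open U.
Proof.
move=> h; rewrite openE => x Ux; have [W [oW Wx WU]] := h x Ux.
rewrite /interior nbhsE; exists W => //.
Qed.

End Gen.
Arguments Vmin_refl {T} a.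

Lemma cont_mono (S T : topologicalType) (h : S -> T) (a x : S) :
  continuous h -> Vmin a x -> Vmin (h a) (h x).
Proof.
move=> /continuousP ch hax U oU Uha.
exact: (hax (h @^-1` U) (ch U oU) Uha).
Qed.
Definition cyc (T : eqType) (s : seq T) (x : T) :=
  nth x s ((index x s).+1 %% size s).

Lemma iter_cyc (T : eqType) (s : seq T) d i n : uniq s -> (i < size s)%N ->
  iter n (cyc s) (nth d s i) = nth d s ((i + n) %% size s).
Proof.
move=> us lt; have s0 : (0 < size s)%N by apply: leq_ltn_trans lt.
elim: n => [|n IH]; first by rewrite addn0 modn_small.
rewrite iterS IH /cyc.
have k_lt : ((i + n) %% size s < size s)%N by rewrite ltn_pmod.
rewrite index_uniq //.
rewrite (set_nth_default d); last by rewrite ltn_pmod.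
have -> : (((i + n) %% size s).+1 = (i + n) %% size s + 1)%N by rewrite addn1.
by rewrite modnDml addn1 addnS.
Qed.

Lemma cyc_reach (T : eqType) (s : seq T) x y : uniq s -> x \in s -> y \in s ->
  exists n, iter n (cyc s) x = y.
Proof.
move=> us xs ys.
have ix : (index x s < size s)%N by rewrite index_mem.
have iy : (index y s < size s)%N by rewrite index_mem.
exists (index y s + (size s - index x s)).
have := iter_cyc x (index y s + (size s - index x s)) us ix.
rewrite nth_index // => ->.
have -> : (index x s + (index y s + (size s - index x s)) = index y s + size s)%N.
  by rewrite addnCA subnKC // ltnW.
by rewrite modnDr modn_small // nth_index.
Qed.

Lemma cyc_in (T : eqType) (s : seq T) x : x \in s -> cyc s x \in s.
Proof.
move=> xs; rewrite /cyc mem_nth // ltn_pmod //.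
by case: s xs.
Qed.

Section Alex.
Variable T : topologicalType.
Hypothesis Vopen : forall a : T, open (Vmin a).
Hypothesis Vfin : forall a : T, finite_set (Vmin a).
Hypothesis Vsym : forall a x : T, Vmin a x -> Vmin x a.

Lemma Vmin_eq (a x : T) : Vmin a x -> Vmin x = Vmin a.
Proof.
move=> ax; rewrite predeqE => y; split => h.
  exact: Vmin_trans ax h.
exact: Vmin_trans (Vsym ax) h.
Qed.

Definition enumV (a : T) : seq T :=
  xget [::] (fun s : seq T => uniq s /\ [set` s] = Vmin a).

Lemma enumV_spec a : uniq (enumV a) /\ [set` enumV a] = Vmin a.
Proof.
apply: (@xgetPex _ [::] (fun s : seq T => uniq s /\ [set` s] = Vmin a)).
have [s ->] := (finite_seqP (Vmin a)).1 (Vfin a).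
exists (undup s); split; first exact: undup_uniq.
by rewrite predeqE => y /=; rewrite mem_undup.
Qed.

Lemma enumV_mem a y : (y \in enumV a) <-> Vmin a y.
Proof. by have [_ <-] := enumV_spec a. Qed.

Definition fV (x : T) := cyc (enumV x) x.

Lemma fV_mem x : Vmin x (fV x).
Proof.
have h : x \in enumV x.
  apply/enumV_mem; exact: Vmin_refl.
apply/enumV_mem; exact: cyc_in.
Qed.

Lemma Vf_fV a : Vf fV a = Vmin a.
Proof.
rewrite predeqE => x; split.
  move=> [n <-]; elim: n => [|n IH]; first exact: (Vmin_refl x).
  rewrite iterS; exact: Vmin_trans (Vsym (@fV_mem _)) IH.
move=> ax.
have [us _] := enumV_spec a.
have H : forall n, iter n fV x = iter n (cyc (enumV a)) x /\
                   iter n (cyc (enumV a)) x \in enumV a.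
  elim => [|n [IH1 IH2]]; first by split => //; apply/enumV_mem.
  rewrite !iterS IH1; split; last exact: cyc_in.
  by rewrite /fV /enumV (Vmin_eq ((enumV_mem _ _).1 IH2)).
have [n hn] := cyc_reach us ((enumV_mem _ _).2 ax) ((enumV_mem _ _).2 (Vmin_refl a)).
by exists n; rewrite (H n).1.
Qed.

Lemma alex_of : functional_alexandroff T.
Proof.
exists fV => U; split.
  move=> oU x Ux; exists x; rewrite Vf_fV; split; first exact: Vmin_refl.
  exact: Vmin_sub.
move=> h; apply: open_cover => x /h [a]; rewrite Vf_fV => -[ax aU].
by exists (Vmin a).
Qed.

End Alex.

Lemma Vf_refl (T : Type) (f : T -> T) a : Vf f a a.
Proof. by exists 0%N. Qed.

Section FA.
Variable T : topologicalType.
Variable f : T -> T.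
Hypothesis hf : forall U : set T,
    open U <-> (forall x, U x -> exists a, Vf f a x /\ Vf f a `<=` U).

Lemma Vf_open a : open (Vf f a).
Proof. by apply/hf => x ax; exists a; split. Qed.

Lemma Vf_eq a : Vf f a = Vmin a.
Proof.
rewrite predeqE => x; split.
  move=> [n hn] U oU Ua.
  have [b [[m hm] bU]] := (hf U).1 oU a Ua.
  apply: bU; exists (m + n)%N; by rewrite iterD hn.
by move=> h; apply: h; [exact: Vf_open | exact: Vf_refl].
Qed.
End FA.

Lemma FA_kprimal (T : topologicalType) k : (0 < k)%N ->
  functional_alexandroff T -> k_primal k T.
Proof.
move=> hk [f hf]; exists (fun _ => f) => a.
have -> : [set x | forall i : 'I_k, Vf f a x] = Vf f a.
  rewrite predeqE => x; split; last by move=> h i.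
  by move=> /(_ (Ordinal hk)).
by rewrite (Vf_eq hf); split => //; rewrite -(Vf_eq hf); exact: Vf_open.
Qed.

Lemma kprimal_P2 (T : topologicalType) k (e : T) : (0 < k)%N ->
  (forall x, Vmin e x -> Vmin x e) ->
  k_primal k T -> open (Vmin e) /\ finite_set (Vmin e).
Proof.
move=> hk sym [fs hfs].
have [oe eqe] := hfs e; split; first by rewrite -eqe.
set f0 := fs (Ordinal hk).
have H : forall b, Vmin e b -> (exists n, iter n f0 b = e) /\ (exists m, iter m f0 e = b).
  move=> b eb; split.
    by move: eb; rewrite -eqe => /(_ (Ordinal hk)) [m hm]; exists m.
  have h1 : Vmin b e by apply: sym.
  move: h1; rewrite -(hfs b).2 => /(_ (Ordinal hk)) [n hn].
  by exists n.
have [[p [p0 hp]]|np] := pselect (exists p, (0 < p)%N /\ iter p f0 e = e).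
  have hq : forall q, iter (q * p) f0 e = e.
    by elim => [|q IH] //; rewrite mulSn iterD IH hp.
  apply: (sub_finite_set (B := ((fun i => iter i f0 e) @` `I_p))); last first.
    exact/finite_image/finite_II.
  move=> b /H [_ [m <-]]; exists (m %% p)%N; first by rewrite /= ltn_pmod.
  by rewrite {2}(divn_eq m p) addnC iterD hq.
apply: (sub_finite_set (B := [set e])); last exact: finite_set1.
move=> b /H [[n hn] [m hm]].
case: (posnP (n + m)) => h.
  by move: h hm => /eqP; rewrite addn_eq0 => /andP [_ /eqP ->] /= <-.
by exfalso; apply: np; exists (n + m)%N; split => //; rewrite iterD hm hn.
Qed.
Definition indisc (T : Type) : Type := T.
Definition indisc_op (T : Type) : set_system T := fun A => A = set0 \/ A = setT.

Lemma indisc_opT T : indisc_op (@setT T).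
Proof. by right. Qed.

Lemma indisc_opI T : setI_closed (@indisc_op T).
Proof.
move=> A B [->|->] [->|->]; rewrite ?set0I ?setI0 ?setIT ?setTI; by [left|right].
Qed.

Lemma indisc_opU T (I : Type) (f : I -> set T) :
  (forall i, indisc_op (f i)) -> indisc_op (\bigcup_i f i).
Proof.
move=> h; have [[i fi]|ni] := pselect (exists i, f i = setT).
  right; rewrite predeqE => x; split => // _; exists i => //; by rewrite fi.
left; rewrite predeqE => x; split => // -[i _ fiX].
have [fi0|fiT] := h i; first by rewrite fi0 in fiX.
by exfalso; apply: ni; exists i.
Qed.

HB.instance Definition _ (T : choiceType) := Choice.copy (indisc T) T.
HB.instance Definition _ (T : choiceType) :=
  isOpenTopological.Build (indisc T) (@indisc_opT T) (@indisc_opI T) (@indisc_opU T).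

Lemma indisc_open (T : choiceType) (A : set (indisc T)) :
  open A -> A = set0 \/ A = setT.
Proof. by []. Qed.

Lemma indisc_nbhs (T : choiceType) (p : indisc T) (P : set (indisc T)) :
  nbhs p P -> forall q, P q.
Proof.
rewrite nbhsE => -[B [oB Bp] BP] q; apply: BP.
by case: (indisc_open oB) => hB; [rewrite hB in Bp | rewrite hB].
Qed.

Lemma cont_to_indisc (S : topologicalType) (T : choiceType) (f : S -> indisc T) :
  continuous f.
Proof.
apply/continuousP => A /indisc_open [->|->]; [exact: open0 | exact: openT].
Qed.

Definition goodV (T : topologicalType) (p : T) :=
  [/\ open (Vmin p), finite_set (Vmin p) & forall x, Vmin p x -> Vmin x p].

Lemma good_alex (T : topologicalType) : (forall p : T, goodV p) ->
  functional_alexandroff T.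
Proof.
move=> h; apply: alex_of.
- by move=> a; case: (h a).
- by move=> a; case: (h a).
- by move=> a x; case: (h a) => _ _; apply.
Qed.

Section Transfer.
Variables (S T : topologicalType) (h : S -> T) (g : T -> S).
Hypotheses (hg : cancel h g) (gh : cancel g h)
  (ch : continuous h) (cg : continuous g).

Lemma Vmin_homeo p : Vmin (h p) = h @` Vmin p.
Proof.
rewrite predeqE => y; split.
  move=> hy; exists (g y); last by rewrite gh.
  by have := cont_mono cg hy; rewrite hg.
by move=> [q pq <-]; exact: cont_mono ch pq.
Qed.

Lemma good_homeo p : goodV p -> goodV (h p).
Proof.
move=> [op fp sp]; rewrite /goodV Vmin_homeo; split.
- have -> : h @` Vmin p = g @^-1` Vmin p.
    rewrite predeqE => y; split; first by move=> [q pq <-]; rewrite /= hg.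
    by move=> gy; exists (g y) => //; rewrite gh.
  by move/continuousP: cg; apply.
- exact: finite_image.
- by move=> _ [q pq <-]; exact: cont_mono ch (sp q pq).
Qed.
End Transfer.

Section Prod.
Variables (E F : topologicalType).
Hypotheses (Ein : indiscrete E) (Fd : discrete F) (Efin : finite_set [set: E]).

Lemma Vmin_prod (a : E) (y : F) : Vmin (a, y) = [set q | q.2 = y].
Proof.
rewrite predeqE => -[b y']; split => /=.
  move=> h; apply: (h [set q | q.2 = y]) => //.
  rewrite openE => -[c z] /= ->.
  rewrite /interior; exists (setT, [set y]) => /=.
    split; first exact: filterT.
    by apply: open_nbhs_nbhs; split => //; apply: Fd.
  by move=> -[u v] [_ /= ->].
move=> -> U oU Uay.
move: oU; rewrite openE => /(_ _ Uay) [[P Q] /= [nP nQ] PQU].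
apply: PQU; split => /=; last exact: nbhs_singleton nQ.
move: nP; rewrite nbhsE => -[B [oB Ba] BP]; apply: BP.
by case: (Ein oB) => hB; [rewrite hB in Ba | rewrite hB].
Qed.

Lemma good_prod (p : E * F) : goodV p.
Proof.
case: p => a y; rewrite /goodV Vmin_prod; split.
- rewrite openE => -[c z] /= ->.
  rewrite /interior; exists (setT, [set y]) => /=.
    split; first exact: filterT.
    by apply: open_nbhs_nbhs; split => //; apply: Fd.
  by move=> -[u v] [_ /= ->].
- have -> : [set q : E * F | q.2 = y] = (fun x => (x, y)) @` setT.
    rewrite predeqE => -[u v]; split => /=; first by move=> ->; exists u.
    by move=> [w _ [_ ->]].
  exact: finite_image.
- by move=> -[b y'] /= ->; rewrite Vmin_prod.
Qed.
End Prod.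

Lemma P4_alex (G E F : topologicalType) :
  finite_set [set: E] -> indiscrete E -> discrete F ->
  homeomorphic (E * F)%type G -> functional_alexandroff G.
Proof.
move=> Efin Ein Fd [h [g [hg gh ch cg]]]; apply: good_alex => x.
rewrite -(gh x); apply: (good_homeo hg gh ch cg).
exact: good_prod.
Qed.

Lemma Vmin_eqS (T : topologicalType) (a x : T) :
  (forall y, Vmin a y -> Vmin y a) -> Vmin a x -> Vmin x = Vmin a.
Proof.
move=> sym ax; rewrite predeqE => y; split => h.
  exact: Vmin_trans ax h.
exact: Vmin_trans (sym x ax) h.
Qed.

Section Grp.
Variables (G : topologicalType) (mul : G -> G -> G) (inv : G -> G) (e : G).
Hypothesis hG : is_topgroup mul inv e.

Let mulA : forall x y z, mul x (mul y z) = mul (mul x y) z.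
Proof. by case: hG. Qed.
Let mul1g x : mul e x = x. Proof. by case: hG => _ h _ _ _; case: (h x). Qed.
Let mulg1 x : mul x e = x. Proof. by case: hG => _ h _ _ _; case: (h x). Qed.
Let mulVg x : mul (inv x) x = e. Proof. by case: hG => _ _ h _ _; case: (h x). Qed.
Let mulgV x : mul x (inv x) = e. Proof. by case: hG => _ _ h _ _; case: (h x). Qed.
Let cmul : continuous (fun p : G * G => mul p.1 p.2). Proof. by case: hG. Qed.
Let cinv : continuous inv. Proof. by case: hG. Qed.

Let inve : inv e = e. Proof. by rewrite -[inv e]mul1g mulgV. Qed.

Lemma cont_mul2 (f g : G -> G) : continuous f -> continuous g ->
  continuous (fun x => mul (f x) (g x)).
Proof.
move=> cf cg x.
apply: (continuous_comp (f := fun x => (f x, g x))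
          (g := fun p : G * G => mul p.1 p.2)); last exact: cmul.
exact: cvg_pair (cf x) (cg x).
Qed.

Let cid : continuous (fun x : G => x). Proof. by move=> x; exact: cvg_id. Qed.

Lemma cont_L (a : G) : continuous (mul a).
Proof.
have := @cont_mul2 (fun _ => a) (fun x => x) (@cst_continuous _ _ a) cid.
by [].
Qed.

Lemma cont_R (a : G) : continuous (mul^~ a).
Proof.
have := @cont_mul2 (fun x => x) (fun _ => a) cid (@cst_continuous _ _ a).
by [].
Qed.

Lemma sym_e b : Vmin e b -> Vmin b e.
Proof.
move=> eb.
have c : continuous (fun x => mul b (inv x)).
  exact: (@cont_mul2 (fun _ => b) inv (@cst_continuous _ _ b) cinv).
by have := cont_mono c eb; rewrite /= inve mulg1 mulgV.
Qed.

Lemma sym_all (a x : G) : Vmin a x -> Vmin x a.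
Proof.
move=> ax.
have h1 : Vmin e (mul (inv a) x).
  by have := cont_mono (@cont_L (inv a)) ax; rewrite mulVg.
have := cont_mono (@cont_L a) (sym_e h1).
by rewrite mulA mulgV mul1g mulg1.
Qed.

Lemma good_all : open (Vmin e) -> finite_set (Vmin e) -> forall a : G, goodV a.
Proof.
move=> oe fe a.
have hcan1 : cancel (mul a) (mul (inv a)) by move=> x; rewrite mulA mulVg mul1g.
have hcan2 : cancel (mul (inv a)) (mul a) by move=> x; rewrite mulA mulgV mul1g.
rewrite -[a]mulg1.
apply: (good_homeo hcan1 hcan2 (@cont_L a) (@cont_L (inv a))); split => //.
exact: sym_all.
Qed.

Lemma P2_alex : open (Vmin e) -> finite_set (Vmin e) -> functional_alexandroff G.
Proof. by move=> oe fe; apply: good_alex; apply: good_all. Qed.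

Section Constr.
Hypotheses (oe : open (Vmin e)) (fe : finite_set (Vmin e)).

Definition r (x : G) := xget e (Vmin x).

Lemma r_in (x : G) : Vmin x (r x).
Proof.
by apply: (@xgetPex _ e (Vmin x)); exists x; exact: Vmin_refl.
Qed.

Lemma r_eq (x y : G) : Vmin x y -> r y = r x.
Proof.
move=> xy; rewrite /r (@Vmin_eqS _ x y) //.
by move=> z; apply: sym_all.
Qed.

Lemma r_idem (x : G) : r (r x) = r x.
Proof. exact: r_eq (@r_in x). Qed.

Lemma rP (x : G) : r (r x) == r x.
Proof. by apply/eqP; exact: r_idem. Qed.

Lemma r_mul (x y : G) : r (mul (r x) (r y)) = r (mul x y).
Proof.
have h1 : Vmin (mul (r x) (r y)) (mul x (r y)).
  exact: cont_mono (@cont_R (r y)) (sym_all (@r_in x)).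
have h2 : Vmin (mul x (r y)) (mul x y).
  exact: cont_mono (@cont_L x) (sym_all (@r_in y)).
by symmetry; apply: r_eq; exact: Vmin_trans h1 h2.
Qed.

Lemma r_mulr (x y : G) : r (mul x (r y)) = r (mul x y).
Proof. by rewrite -[LHS]r_mul r_idem r_mul. Qed.

Lemma r_mull (x y : G) : r (mul (r x) y) = r (mul x y).
Proof. by rewrite -[LHS]r_mul r_idem r_mul. Qed.

Lemma Vmin_mul (x y : G) : Vmin e x -> Vmin e y -> Vmin e (mul x y).
Proof.
move=> ex ey; have := cont_mono (@cont_R y) ex; rewrite mul1g.
exact: Vmin_trans ey.
Qed.

Lemma Vmin_inv (x : G) : Vmin e x -> Vmin e (inv x).
Proof. by move=> ex; have := cont_mono cinv ex; rewrite inve. Qed.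

Definition Et := {x : G | `[< Vmin e x >]}.
Definition Ft := {x : G | r x == x}.

Lemma valE (a : Et) : Vmin e (val a).
Proof. exact: asboolW (valP a). Qed.

Lemma valF (a : Ft) : r (val a) = val a.
Proof. exact: eqP (valP a). Qed.

Definition mulE (a b : Et) : Et :=
  exist _ (mul (val a) (val b)) (asboolT (Vmin_mul (valE a) (valE b))).
Definition invE (a : Et) : Et := exist _ (inv (val a)) (asboolT (Vmin_inv (valE a))).
Definition eE : Et := exist _ e (asboolT (Vmin_refl e)).

Definition mulF (a b : Ft) : Ft := exist _ (r (mul (val a) (val b))) (rP _).
Definition invF (a : Ft) : Ft := exist _ (r (inv (val a))) (rP _).
Definition eF : Ft := exist _ (r e) (rP _).

Lemma topgroupE : is_topgroup (T := indisc Et) mulE invE eE.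
Proof.
split.
- by move=> a b c; apply: val_inj => /=; rewrite mulA.
- by move=> a; split; apply: val_inj => /=; rewrite ?mul1g ?mulg1.
- by move=> a; split; apply: val_inj => /=; rewrite ?mulVg ?mulgV.
- exact: cont_to_indisc.
- exact: cont_to_indisc.
Qed.

Lemma disc_pair_nbhs (X : discreteTopologicalType) (a b : X) :
  nbhs (a, b) [set (a, b)].
Proof.
exists ([set a], [set b]) => /=; first by split; exact: discrete_set1.
by move=> -[u v] [/= -> ->].
Qed.

Lemma cont_from_disc2 (X : discreteTopologicalType) (Y : topologicalType)
  (f : X * X -> Y) : continuous f.
Proof.
move=> [a b] U nU; apply: (filterS _ (disc_pair_nbhs a b)).
by move=> q ->; exact: nbhs_singleton nU.
Qed.

Lemma cont_from_disc (X : discreteTopologicalType) (Y : topologicalType)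
  (f : X -> Y) : continuous f.
Proof.
move=> a U nU; apply: (filterS _ (discrete_set1 a)).
by move=> q ->; exact: nbhs_singleton nU.
Qed.

Lemma topgroupF : is_topgroup (T := discrete_topology Ft) mulF invF eF.
Proof.
split.
- by move=> a b c; apply: val_inj => /=; rewrite r_mulr r_mull mulA.
- move=> a; split; apply: val_inj => /=.
    by rewrite r_mull mul1g valF.
  by rewrite r_mulr mulg1 valF.
- move=> a; split; apply: val_inj => /=.
    by rewrite r_mull mulVg.
  by rewrite r_mulr mulgV.
- exact: cont_from_disc2.
- exact: cont_from_disc.
Qed.

Lemma psi1 (x : G) : Vmin e (mul (inv (r x)) x).
Proof.
by have := cont_mono (@cont_L (inv (r x))) (sym_all (@r_in x)); rewrite mulVg.
Qed.

Definition phi (p : (indisc Et * discrete_topology Ft)%type) : G :=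
  mul (val p.2) (val p.1).
Definition psi (x : G) : (indisc Et * discrete_topology Ft)%type :=
  (exist _ (mul (inv (r x)) x) (asboolT (psi1 x)) : Et,
   exist _ (r x) (rP x) : Ft).

Lemma Vmin_Lmul (b x : G) : Vmin e x -> Vmin b (mul b x).
Proof. by move=> ex; have := cont_mono (@cont_L b) ex; rewrite mulg1. Qed.

Lemma phiK : cancel phi psi.
Proof.
move=> [a b]; rewrite /phi /psi /=.
have hr : r (mul (val b) (val a)) = val b.
  by rewrite (r_eq (@Vmin_Lmul (val b) _ (valE a))) valF.
congr pair; apply: val_inj => /=; rewrite hr //.
by rewrite mulA mulVg mul1g.
Qed.

Lemma psiK : cancel psi phi.
Proof. by move=> x; rewrite /phi /psi /= mulA mulgV mul1g. Qed.

Lemma phi_cont : continuous phi.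
Proof.
move=> [a b] U nU.
have hsub : [set: indisc Et] `*` [set b] `<=` phi @^-1` U.
  move=> -[a' b'] [_ /= ->]; rewrite /phi /=.
  have h : Vmin (mul (val b) (val a)) (mul (val b) (val a')).
    apply: (@Vmin_trans _ _ (val b)).
      exact: sym_all (@Vmin_Lmul (val b) _ (valE a)).
    exact: @Vmin_Lmul (val b) _ (valE a').
  move: nU; rewrite nbhsE => -[B [oB Bab] BU]; apply: BU.
  exact: h B oB Bab.
apply: (filterS hsub).
by exists (setT, [set b]) => //=; split; [exact: filterT | exact: discrete_set1].
Qed.

Lemma psi_cont : continuous psi.
Proof.
move=> x W nW.
have nx : nbhs x (Vmin x).
  apply: open_nbhs_nbhs; split; last exact: Vmin_refl.
  by case: (good_all oe fe x).
apply: (filterS _ nx) => y xy.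
move: nW => [[P Q] /= [nP nQ] PQW]; apply: PQW; split => /=.
  exact: (@indisc_nbhs Et _ _ nP).
have -> : (exist _ (r y) (rP y) : Ft) = exist _ (r x) (rP x).
  by apply: val_inj => /=; exact: r_eq.
exact: nbhs_singleton nQ.
Qed.

Lemma Efin : finite_set [set: indisc Et].
Proof.
apply: (sub_finite_set (B := insubd eE @` Vmin e)); last exact: finite_image.
move=> a _; exists (val a); first exact: valE.
exact: valKd.
Qed.

Lemma P2_P3 : exists (E F : topologicalType)
              (mulE : E -> E -> E) (invE : E -> E) (eE : E)
              (mulF : F -> F -> F) (invF : F -> F) (eF : F),
              [/\ is_topgroup mulE invE eE /\ is_topgroup mulF invF eF,
                  finite_set [set: E], indiscrete E, discrete F &
                  homeomorphic (E * F)%type G].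
Proof.
exists (indisc Et), (discrete_topology Ft), mulE, invE, eE, mulF, invF, eF.
split.
- exact: (conj topgroupE topgroupF).
- exact: Efin.
- by move=> A; exact: indisc_open.
- by move=> A; exact: discrete_open.
- by exists phi, psi; split; [exact: phiK | exact: psiK | exact: phi_cont | exact: psi_cont].
Qed.

End Constr.

End Grp.

Theorem mainTheorem11 (G : topologicalType) (mul : G -> G -> G) (inv : G -> G)
    (e : G) (hG : is_topgroup mul inv e) (k : nat) (hk : (1 <= k)%N) :
  let P1 := functional_alexandroff G in
  let P1' := k_primal k G in
  let P2 := open (Vmin e) /\ finite_set (Vmin e) in
  let P3 := exists (E F : topologicalType)
              (mulE : E -> E -> E) (invE : E -> E) (eE : E)
              (mulF : F -> F -> F) (invF : F -> F) (eF : F),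
              [/\ is_topgroup mulE invE eE /\ is_topgroup mulF invF eF,
                  finite_set [set: E], indiscrete E, discrete F &
                  homeomorphic (E * F)%type G] in
  let P4 := exists (E F : topologicalType),
              [/\ finite_set [set: E], indiscrete E, discrete F &
                  homeomorphic (E * F)%type G] in
  [/\ P1 <-> P1', P1 <-> P2, P1 <-> P3 & P1 <-> P4].
Proof.
move=> P1 P1' P2 P3 P4; rewrite {}/P1 {}/P1' {}/P2 {}/P3 {}/P4.
have sym : forall x, Vmin e x -> Vmin x e by move=> x; exact: (@sym_e G mul inv e hG x).
have h1'2 : k_primal k G -> open (Vmin e) /\ finite_set (Vmin e).
  by move=> h; exact: kprimal_P2 hk sym h.
have h12 : functional_alexandroff G -> open (Vmin e) /\ finite_set (Vmin e).
  by move=> h; apply: h1'2; exact: FA_kprimal hk h.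
have h21 : open (Vmin e) /\ finite_set (Vmin e) -> functional_alexandroff G.
  by move=> [o f]; exact: P2_alex hG o f.
split.
- split; first by move=> h; exact: FA_kprimal hk h.
  by move=> h; apply: h21; exact: h1'2.
- by split.
- split.
    by move/h12 => [o f]; exact: P2_P3 hG o f.
  move=> [E [F [mE [iE [eE [mF [iF [eF [_ fin ind dis hom]]]]]]]]].
  exact: P4_alex fin ind dis hom.
- split.
    move/h12 => [o f].
    have [E [F [mE [iE [eE [mF [iF [eF [_ fin ind dis hom]]]]]]]]] := P2_P3 hG o f.
    by exists E, F; split.
  move=> [E [F [fin ind dis hom]]].
  exact: P4_alex fin ind dis hom.
Qed.
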